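(* Assume Case 3 holds. Then for every $n\ge1$ the order of $Q^n$ with respect to $z$, i.e. $\min\{i: \text{the coefficient of } z^iw^j \text{ in } Q^n \text{ is nonzero for some } j\}$, equals $\gamma_n$. Consequently $(\gamma_n,d^n)$ is the vertex of $N(Q^n)$ with minimal $x$-coordinate, and $N(Q^n)\subset\{(x,y):x\ge\gamma_n,\ x+l_2y\ge\gamma_n+l_2d^n\}$.
   Context: Let $f(z,w)=(p(z),q(z,w))$ be a holomorphic skew product germ at the origin of $\mathbb{C}^2$ with $f(0,0)=(0,0)$, where $p(z)=a_\delta z^\delta+O(z^{\delta+1})$ with $a_\delta\neq0$ and integer $\delta\ge1$, and $q(z,w)=\sum_{i+j\ge1}b_{ij}z^iw^j$ is not identically zero. For $n\ge1$ write $f^n=(p^n,Q^n)$. The Newton polygon $N(g)$ of a nonzero germ $g=\sum g_{ij}z^iw^j$ is the convex hull of $\bigcup_{g_{ij}\neq0}\{(x,y):x\ge i,\ y\ge j\}$. Let $(n_1,m_1),\dots,(n_s,m_s)$ be the vertices of $N(q)$ with $n_1<\cdots<n_s$, $m_1>\cdots>m_s$; for $1\le k\le s-1$ let $T_k$ be the $y$-intercept of the line through $(n_k,m_k)$ and $(n_{k+1},m_{k+1})$. Case 3 means: $s>1$ and $T_1\le\delta$; set $(\gamma,d)=(n_1,m_1)$ and $l_2=\frac{n_2-n_1}{m_1-m_2}$. Define $\gamma_n=\gamma(\delta^{n-1}+\delta^{n-2}d+\cdots+d^{n-1})$. *)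

(* Defs.v *)
From mathcomp Require Import all_boot all_order all_algebra.
From mathcomp Require Import reals.
From mathcomp.real_closed Require Export complex.
Set Implicit Arguments.
Unset Strict Implicit.
Unset Printing Implicit Defensive.
Import Order.TTheory GRing.Theory Num.Theory.
Local Open Scope ring_scope.

(* A (formal) power series in two variables z, w: g i j is the coefficient
   of z^i w^j. *)
Definition ps2 (C : Type) := nat -> nat -> C.

Section PowerSeries.
Variable C : comNzRingType.

Definition psmul (a b : ps2 C) : ps2 C := fun i j =>
  \sum_(i1 < i.+1) \sum_(j1 < j.+1) a i1 j1 * b (i - i1)%N (j - j1)%N.

Definition ps1 : ps2 C := fun i j => if (i == 0%N) && (j == 0%N) then 1 else 0.

Definition psexp (a : ps2 C) (n : nat) : ps2 C := iter n (psmul a) ps1.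

(* Composition g(A(z,w), B(z,w)) for series A, B without constant term:
   since A^k B^l has total order >= k + l, the coefficient of z^i w^j only
   involves the terms g k l with k, l <= i + j. *)
Definition pscomp (g A B : ps2 C) : ps2 C := fun i j =>
  \sum_(k < (i + j).+1) \sum_(l < (i + j).+1)
     g k l * psmul (psexp A k) (psexp B l) i j.

Definition psZ : ps2 C := fun i j => if (i == 1%N) && (j == 0%N) then 1 else 0.
Definition psW : ps2 C := fun i j => if (i == 0%N) && (j == 1%N) then 1 else 0.

Definition ps_of1 (p : nat -> C) : ps2 C := fun i j => if j == 0%N then p i else 0.

(* f^n = (p^n, Q^n) for the skew product f = (p, q); f^0 = id and
   f^(n+1) = f o f^n, i.e. (p^(n+1), Q^(n+1)) = (p(p^n), q(p^n, Q^n)). *)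
Definition skew_iter (p : nat -> C) (q : ps2 C) (n : nat) : ps2 C * ps2 C :=
  iter n (fun PQ => (pscomp (ps_of1 p) PQ.1 PQ.2, pscomp q PQ.1 PQ.2)) (psZ, psW).

Definition Qiter (p : nat -> C) (q : ps2 C) (n : nat) : ps2 C := (skew_iter p q n).2.

End PowerSeries.

(* convergence (holomorphic germ): coefficients bounded by M r^-(i+j) *)
Definition convergent1 (C : numDomainType) (p : nat -> C) : Prop :=
  exists r M : C, 0 < r /\ forall i, `|p i| * r ^+ i <= M.
Definition convergent2 (C : numDomainType) (g : ps2 C) : Prop :=
  exists r M : C, 0 < r /\ forall i j, `|g i j| * r ^+ (i + j) <= M.

(* Newton polygon: convex hull of the union over the support of the quadrants
   {(x,y) : x >= i, y >= j}; the convex hull is the set of finite convex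
   combinations of points of that union. *)
Definition newton_polygon (R : realType) (C : nzRingType) (g : ps2 C) :
    R * R -> Prop := fun P =>
  exists (n : nat) (t : 'I_n -> R) (X : 'I_n -> R * R),
    [/\ forall k, 0 <= t k,
        \sum_(k < n) t k = 1,
        forall k, exists i j, [/\ g i j != 0, i%:R <= (X k).1 & j%:R <= (X k).2],
        P.1 = \sum_(k < n) t k * (X k).1
      & P.2 = \sum_(k < n) t k * (X k).2].

Arguments newton_polygon R {C} g.

Definition is_vertex (R : realType) (S : R * R -> Prop) (P : R * R) : Prop :=
  S P /\ forall A B : R * R, forall t : R, S A -> S B -> 0 < t < 1 ->
    P = (t * A.1 + (1 - t) * B.1, t * A.2 + (1 - t) * B.2) -> A = B.

(* Main.v *)
Require Import Defs.
From mathcomp Require Import all_boot all_order all_algebra.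
From mathcomp Require Import reals.
From mathcomp.real_closed Require Import complex.
From mathcomp Require Import zify ring lra.
From Stdlib Require Import FunctionalExtensionality Classical.
Import Order.TTheory GRing.Theory Num.Theory.
Local Open Scope ring_scope.

Set Implicit Arguments. Unset Strict Implicit.

Section Alg.
Variable C : comNzRingType.

Definition wb (a b : nat) (g : ps2 C) (c : nat) :=
  forall i j, g i j != 0 -> (c <= a * i + b * j)%N.

Lemma wb_mul a b x y al be : wb a b x al -> wb a b y be -> wb a b (psmul x y) (al + be).
Proof.
move=> hx hy i j; apply: contraR => hlt; rewrite /psmul big1 // => i1 _.
rewrite big1 // => j1 _.
case: (eqVneq (x i1 j1) 0) => [->|/hx h1]; first by rewrite mul0r.
case: (eqVneq (y (i - i1)%N (j - j1)%N) 0) => [->|/hy h2]; first by rewrite mulr0.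
exfalso; move: (ltn_ord i1) (ltn_ord j1) => l1 l2; move: hlt; rewrite -ltnNge.
rewrite !mulnBr in h2.
have := leq_mul (leqnn a) (l1 : (i1 <= i)%N); have := leq_mul (leqnn b) (l2 : (j1 <= j)%N).
lia.
Qed.

Lemma psexpS (A : ps2 C) k : psexp A k.+1 = psmul A (psexp A k).
Proof. by []. Qed.

Lemma wb_exp a b A al k : wb a b A al -> wb a b (psexp A k) (k * al).
Proof.
move=> hA; elim: k => [|k IH] i j.
  by rewrite mul0n.
by rewrite psexpS mulSn; apply: wb_mul.
Qed.

Lemma wb_comp a b g A B al be c : wb a b A al -> wb a b B be ->
  (forall k l, g k l != 0 -> (c <= k * al + l * be)%N) -> wb a b (pscomp g A B) c.
Proof.
move=> hA hB hg i j; apply: contraR => hlt; rewrite /pscomp big1 // => k _.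
rewrite big1 // => l _.
case: (eqVneq (g k l) 0) => [->|/hg h1]; first by rewrite mul0r.
case: (eqVneq (psmul (psexp A k) (psexp B l) i j) 0) => [->|]; first by rewrite mulr0.
move/(wb_mul (wb_exp (k:=k) hA) (wb_exp (k:=l) hB)) => h2; exfalso; move: hlt; rewrite -ltnNge; lia.
Qed.

Definition zonly (X : ps2 C) := forall i j, j != 0%N -> X i j = 0.

Lemma zonly_mul x y : zonly x -> zonly y -> zonly (psmul x y).
Proof.
move=> hx hy i j hj; rewrite /psmul big1 // => i1 _; rewrite big1 // => j1 _.
case: (eqVneq (nat_of_ord j1) 0%N) => [->|/hx ->]; last by rewrite mul0r.
by rewrite hy ?mulr0 // subn0.
Qed.

Lemma zonly_ps1 : zonly (ps1 C).
Proof. by move=> i j hj; rewrite /ps1 (negbTE hj) andbF. Qed.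

Lemma zonly_exp A k : zonly A -> zonly (psexp A k).
Proof. move=> hA; elim: k => [|k IH]; [exact: zonly_ps1 | exact: zonly_mul]. Qed.

Lemma zonly_comp p A B : zonly A -> zonly (pscomp (ps_of1 p) A B).
Proof.
move=> hA i j hj; rewrite /pscomp big1 // => k _; rewrite big1 // => l _.
rewrite /ps_of1; case: (eqVneq (nat_of_ord l) 0%N) => [->|_]; last by rewrite mul0r.
by rewrite zonly_mul ?mulr0 //; [exact: zonly_exp | exact: zonly_ps1].
Qed.

Definition row (A : ps2 C) (r : nat) : ps2 C := fun i j => if i == 0%N then A r j else (0 : C).

Lemma psmul_row0 (x y : ps2 C) j : psmul x y 0 j = \sum_(j1 < j.+1) x 0%N j1 * y 0%N (j - j1)%N.
Proof. by rewrite /psmul big_ord1. Qed.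

Lemma psmul_lead (x y : ps2 C) al be j : wb 1 0 x al -> wb 1 0 y be ->
  psmul x y (al + be)%N j = \sum_(j1 < j.+1) x al j1 * y be (j - j1)%N.
Proof.
move=> hx hy; rewrite /psmul.
have hl : (al < (al + be).+1)%N by lia.
rewrite (bigD1 (Ordinal hl)) //= [X in _ + X]big1 ?addr0; first by rewrite addKn.
move=> i1 hi1; rewrite big1 // => j1 _.
case: (eqVneq (x i1 j1) 0) => [->|/hx h1]; first by rewrite mul0r.
case: (eqVneq (y (al + be - i1)%N (j - j1)%N) 0) => [->|/hy h2]; first by rewrite mulr0.
exfalso; move: hi1 => /eqP hne; apply: hne; apply: val_inj => /=.
have := ltn_ord i1; move: h1 h2; rewrite !mul1n !mul0n !addn0; lia.
Qed.

Lemma rowM A B al be : wb 1 0 A al -> wb 1 0 B be ->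
  row (psmul A B) (al + be)%N = psmul (row A al) (row B be).
Proof.
move=> hA hB; apply: functional_extensionality => i; apply: functional_extensionality => j.
case: (eqVneq i 0%N) => [->|hi].
  by rewrite psmul_row0 /row /= psmul_lead.
rewrite /row (negbTE hi) /psmul big1 // => i1 _; rewrite big1 // => j1 _.
case: (eqVneq (nat_of_ord i1) 0%N) => [->|hi1]; last by rewrite /row; case: ifP => _; rewrite ?mul0r //; move: hi1 => /eqP hi1; case: ifP => /eqP //; rewrite mul0r.
by rewrite /row subn0 (negbTE hi) mulr0.
Qed.

Lemma rowX A al k : wb 1 0 A al -> row (psexp A k) (k * al) = psexp (row A al) k.
Proof.
move=> hA; elim: k => [|k IH].
  apply: functional_extensionality => i; apply: functional_extensionality => j.
  by rewrite /row /= /ps1; case: (i == 0%N).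
by rewrite psexpS mulSn rowM ?IH //; apply: wb_exp.
Qed.

Definition ctf (g A B : ps2 C) (al be c j : nat) := fun k l : nat =>
    (if (k * al + l * be == c)%N then
       g k l * psmul (psexp (row A al) k) (psexp (row B be) l) 0 j else 0).

Lemma comp_row g A B al be c j : wb 1 0 A al -> wb 1 0 B be ->
  (forall k l, g k l != 0 -> (c <= k * al + l * be)%N) ->
  pscomp g A B c j = \sum_(k < (c + j).+1) \sum_(l < (c + j).+1) ctf g A B al be c j k l.
Proof.
move=> hA hB hg; apply: eq_bigr => k _; apply: eq_bigr => l _; rewrite /ctf.
case: (eqVneq (g k l) 0) => [->|gne]; first by case: ifP; rewrite ?mul0r.
have := hg _ _ gne; case: eqP => [e _|hne hle].
  by rewrite -[X in psmul (psexp A k) _ X]e -(rowX _ hA) -(rowX _ hB) -rowM //; apply: wb_exp.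
case: (eqVneq (psmul (psexp A k) (psexp B l) c j) 0) => [->|]; first by rewrite mulr0.
move/(wb_mul (wb_exp (k:=k) hA) (wb_exp (k:=l) hB)); rewrite mul1n mul0n addn0 => h.
by exfalso; apply: hne; apply/eqP; rewrite eqn_leq h hle.
Qed.

Lemma corner (x y : ps2 C) e1 e2 : wb 0 1 x e1 -> wb 0 1 y e2 ->
  psmul x y 0 (e1 + e2)%N = x 0%N e1 * y 0%N e2.
Proof.
move=> hx hy; rewrite psmul_row0.
have hl : (e1 < (e1 + e2).+1)%N by lia.
rewrite (bigD1 (Ordinal hl)) //= [X in _ + X]big1 ?addr0; first by rewrite addKn.
move=> j1 hj1.
case: (eqVneq (x 0%N j1) 0) => [->|/hx h1]; first by rewrite mul0r.
case: (eqVneq (y 0%N (e1 + e2 - j1)%N) 0) => [->|/hy h2]; first by rewrite mulr0.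
exfalso; move: hj1 => /eqP hne; apply: hne; apply: val_inj => /=.
have := ltn_ord j1; move: h1 h2; rewrite !mul1n !mul0n !add0n; lia.
Qed.

Lemma corner_exp (x : ps2 C) e l : wb 0 1 x e -> psexp x l 0 (l * e)%N = x 0%N e ^+ l.
Proof.
move=> hx; elim: l => [|l IH]; first by rewrite /= /ps1 expr0.
by rewrite psexpS mulSn corner ?IH ?exprS //; apply: wb_exp.
Qed.

Definition scale (s : C) (X : ps2 C) : ps2 C := fun i j => s * X i j.

Lemma psmul1 X i j : psmul (ps1 C) X i j = X i j.
Proof.
rewrite /psmul big_ord_recl [X in _ + X]big1 ?addr0.
  rewrite big_ord_recl [X in _ + X]big1 ?addr0; first by rewrite /ps1 /= mul1r !subn0.
  by move=> j1 _; rewrite /ps1 /= mul0r.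
by move=> i1 _; rewrite big1 // => j1 _; rewrite /ps1 /= mul0r.
Qed.

Lemma psmul_scale s X Y i j : psmul (scale s X) Y i j = s * psmul X Y i j.
Proof.
rewrite /psmul mulr_sumr; apply: eq_bigr => i1 _; rewrite mulr_sumr.
by apply: eq_bigr => j1 _; rewrite /scale mulrA.
Qed.

Lemma psexp_scale1 s k : psexp (scale s (ps1 C)) k = scale (s ^+ k) (ps1 C).
Proof.
elim: k => [|k IH].
  by apply: functional_extensionality => i; apply: functional_extensionality => j;
     rewrite /scale /= mul1r.
rewrite psexpS IH; apply: functional_extensionality => i; apply: functional_extensionality => j.
by rewrite psmul_scale psmul1 /scale exprS mulrA.
Qed.

Lemma sum2_single N (F : nat -> nat -> C) k0 l0 : (k0 < N)%N -> (l0 < N)%N ->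
  (forall k l, (k < N)%N -> (l < N)%N -> (k != k0) || (l != l0) -> F k l = 0) ->
  \sum_(k < N) \sum_(l < N) F k l = F k0 l0.
Proof.
move=> hk hl hF; rewrite (bigD1 (Ordinal hk)) //= [X in _ + X]big1 ?addr0.
  rewrite (bigD1 (Ordinal hl)) //= [X in _ + X]big1 ?addr0 // => l hne; apply: hF => //.
  by apply/orP; right; apply: contra hne => /eqP he; apply/eqP/val_inj.
move=> k hne; rewrite big1 // => l _; apply: hF => //.
by apply/orP; left; apply: contra hne => /eqP he; apply/eqP/val_inj.
Qed.

End Alg.

Lemma key1 (a b gam d D e G k l : nat) : (0 < a)%N -> (0 < b)%N -> (1 <= D)%N -> (1 <= e)%N ->
  (G * a + e * b <= D * b)%N -> (gam <= k)%N -> (a * gam + b * d <= a * k + b * l)%N ->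
  (gam * D + d * G <= k * D + l * G)%N /\
  ((gam * D + d * G == k * D + l * G)%N -> k = gam /\ (d <= l)%N).
Proof.
move=> ha hb hD he hK hk hH.
have [x ex] : exists x, k = (gam + x)%N by exists (k - gam)%N; lia.
subst k.
case: (leqP d l) => hdl.
  have [y ey] : exists y, l = (d + y)%N by exists (l - d)%N; lia.
  subst l.
  rewrite ?mulnDl ?mulnDr in hH *.
  have : (x <= x * D)%N by rewrite leq_pmulr.
  lia.
have [y ey] : exists y, d = (l + y.+1)%N by exists (d - l).-1; lia.
subst d; rewrite ?mulnDl ?mulnDr in hH *.
have h1 : (b * y.+1 * D <= a * x * D)%N by rewrite leq_mul2r; apply/orP; right; lia.
have h2 : (y.+1 * (G * a + e * b) <= y.+1 * (D * b))%N by rewrite leq_mul2l hK orbT.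
have h3 : (y.+1 * G * a < a * x * D)%N.
  rewrite !mulnDr in h2; have : (1 <= y.+1 * e * b)%N by rewrite !muln_gt0 /=; lia.
  lia.
have h4 : (y.+1 * G < x * D)%N.
  rewrite ltnNge; apply/negP => hc; have := leq_mul2l a (x * D) (y.+1 * G); rewrite hc orbT.
  lia.
lia.
Qed.

Lemma key2 (a b gam d D e G k l : nat) : (0 < a)%N -> (0 < b)%N ->
  (G * a + e * b <= D * b)%N -> (gam <= k)%N -> (a * gam + b * d <= a * k + b * l)%N ->
  (a * (gam * D + d * G) + b * (d * e) <= k * (a * D) + l * (a * G + b * e))%N.
Proof.
move=> ha hb hK hk hH.
have [x ex] : exists x, k = (gam + x)%N by exists (k - gam)%N; lia.
subst k.
case: (leqP d l) => hdl.
  have [y ey] : exists y, l = (d + y)%N by exists (l - d)%N; lia.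
  subst l.
  nia.
have [y ey] : exists y, d = (l + y.+1)%N by exists (d - l).-1; lia.
subst d.
have h1 : (b * y.+1 * D <= a * x * D)%N by rewrite leq_mul2r; apply/orP; right; lia.
have h2 : (y.+1 * (G * a + e * b) <= y.+1 * (D * b))%N by rewrite leq_mul2l hK orbT.
nia.
Qed.

Fixpoint G (gam delta d : nat) n := if n is n'.+1 then (gam * delta ^ n' + d * G gam delta d n')%N else 0%N.

Lemma Gkey gam delta d a b n : (gam * a + d * b <= delta * b)%N ->
  (G gam delta d n * a + d ^ n * b <= delta ^ n * b)%N.
Proof.
move=> hc; elim: n => [|n IH] /=; first by rewrite expn0 mul1n.
rewrite !expnS.
have e1 : ((gam * delta ^ n + d * G gam delta d n) * a + d * d ^ n * b
   = delta ^ n * (gam * a) + d * (G gam delta d n * a + d ^ n * b))%N by ring.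
rewrite e1.
have : (d * (G gam delta d n * a + d ^ n * b) <= d * (delta ^ n * b))%N by rewrite leq_mul2l IH orbT.
have : (delta ^ n * (gam * a + d * b) <= delta ^ n * (delta * b))%N by rewrite leq_mul2l hc orbT.
nia.
Qed.

Section Main.
Variable C : idomainType.
Variables (p : nat -> C) (q : ps2 C) (delta gam d a b : nat).
Hypotheses (hdel : (1 <= delta)%N) (hp0 : forall k, (k < delta)%N -> p k = 0) (hpd : p delta != 0)
 (ha : (0 < a)%N) (hb : (0 < b)%N) (hd : (1 <= d)%N) (hcase : (gam * a + d * b <= delta * b)%N)
 (hq1 : q gam d != 0) (hq2 : forall k l, q k l != 0 -> (gam <= k)%N)
 (hq4 : forall k l, q k l != 0 -> (a * gam + b * d <= a * k + b * l)%N).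

Let P n := (skew_iter p q n).1.
Let Q n := (skew_iter p q n).2.
Let GG n := G gam delta d n.

Lemma rowP_eq (X : ps2 C) al : zonly X -> row X al = scale (X al 0%N) (ps1 C).
Proof.
move=> hz; apply: functional_extensionality => i; apply: functional_extensionality => j.
rewrite /row /scale /ps1; case: i => [|i] /=; last by rewrite mulr0.
case: j => [|j] /=; first by rewrite mulr1.
by rewrite hz // mulr0.
Qed.

Lemma skew_inv n : [/\ zonly (P n), wb 1 0 (P n) (delta ^ n)%N, P n (delta ^ n)%N 0%N != 0,
   wb 1 0 (Q n) (GG n) & wb a b (Q n) (a * GG n + b * d ^ n)%N] /\
   ((forall j, (j < d ^ n)%N -> Q n (GG n) j = 0) /\ Q n (GG n) (d ^ n)%N != 0).
Proof.
elim: n => [|n [[z1 z2 z3 w1 w2] [w3 w4]]].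
  rewrite /P /Q /GG /= expn0; split; [split|].
  - by move=> i j hj; rewrite /psZ (negbTE hj) andbF.
  - move=> i j; rewrite /psZ; case: (i =P 1%N) => [-> _|_]; first lia.
    by rewrite andFb eqxx.
  - by rewrite /psZ /= oner_eq0.
  - by move=> i j.
  - move=> i j; rewrite /psW; case: ifP => [/andP[/eqP -> /eqP ->] _|]; last by rewrite eqxx.
    lia.
  - by split; [move=> j; rewrite ltnS leqn0 => /eqP ->; rewrite /psW | rewrite /psW /= oner_eq0].
have e1 : P n.+1 = pscomp (ps_of1 p) (P n) (Q n) by [].
have e2 : Q n.+1 = pscomp q (P n) (Q n) by [].
have dn1 : (1 <= delta ^ n)%N by rewrite expn_gt0; lia.
have en1 : (1 <= d ^ n)%N by rewrite expn_gt0; lia.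
have hK := Gkey n hcase.
have wPab : wb a b (P n) (a * delta ^ n)%N.
  move=> i j hij; have := w1 i j; have := z2 _ _ hij.
  case: (eqVneq j 0%N) => [-> |hj]; last by rewrite z1 ?eqxx in hij.
  by rewrite mul1n mul0n addn0 muln0 addn0 => h _; rewrite leq_mul2l h orbT.
have hpk : forall k l, ps_of1 p k l != 0 -> l = 0%N /\ (delta <= k)%N.
  move=> k l; rewrite /ps_of1; case: (eqVneq l 0%N) => [-> hk|]; last by rewrite eqxx.
  by split => //; rewrite leqNgt; apply: contra hk => /hp0 ->.
have rP : row (P n) (delta ^ n)%N = scale (P n (delta ^ n)%N 0%N) (ps1 C) by apply: rowP_eq.
have wQ : wb 0 1 (row (Q n) (GG n)) (d ^ n)%N.
  move=> i j; rewrite /row; case: ifP => _; last by rewrite eqxx.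
  move=> hj; rewrite mul0n add0n mul1n.
  by rewrite leqNgt; apply: contra hj => /w3 ->.
have cterm : forall k l jj, psmul (psexp (row (P n) (delta ^ n)%N) k) (psexp (row (Q n) (GG n)) l) 0 jj
    = P n (delta ^ n)%N 0%N ^+ k * psexp (row (Q n) (GG n)) l 0 jj.
  by move=> k l jj; rewrite rP psexp_scale1 psmul_scale psmul1.
split; [split|].
- by rewrite e1; apply: zonly_comp.
- rewrite e1; apply: (wb_comp z2 w1) => k l /hpk [-> hk].
  by rewrite mul0n addn0 expnS leq_mul2r hk orbT.
- rewrite e1.
  have hc : forall k l, ps_of1 p k l != 0 -> (delta ^ n.+1 <= k * delta ^ n + l * GG n)%N.
    by move=> k l /hpk [-> hk]; rewrite mul0n addn0 expnS leq_mul2r hk orbT.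
  have hdd : (delta <= delta ^ n.+1)%N by rewrite expnS leq_pmulr.
  rewrite (comp_row _ z2 w1 hc) (sum2_single (k0:=delta) (l0:=0%N)).
  + rewrite /ctf mul0n addn0 -expnS eqxx cterm /ps_of1 /ps1 /= mulr1.
    by rewrite mulf_neq0 // expf_neq0.
  + lia.
  + lia.
  + move=> k l _ _ hne; rewrite /ctf; case: eqP => // he.
    case: (eqVneq (ps_of1 p k l) 0) => [->|/hpk [el hk]]; first by rewrite mul0r.
    exfalso; subst l; move: he; rewrite mul0n addn0 expnS => /eqP; rewrite eqn_pmul2r //.
    by move=> /eqP ek; rewrite ek !eqxx in hne.
- rewrite e2; apply: (wb_comp z2 w1) => k l hkl.
  by case: (key1 ha hb dn1 en1 hK (hq2 hkl) (hq4 hkl)).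
- rewrite e2; apply: (wb_comp wPab w2) => k l hkl.
  rewrite /GG /= expnS; exact: (key2 ha hb hK (hq2 hkl) (hq4 hkl)).
- have hc : forall k l, q k l != 0 -> (GG n.+1 <= k * delta ^ n + l * GG n)%N.
    by move=> k l hkl; case: (key1 ha hb dn1 en1 hK (hq2 hkl) (hq4 hkl)).
  have hT : forall (k l j : nat), (j <= d ^ n.+1)%N -> (k * delta ^ n + l * GG n == GG n.+1)%N ->
      q k l * (P n (delta ^ n)%N 0%N ^+ k * psexp (row (Q n) (GG n)) l 0 j) != 0 ->
      [/\ k = gam, l = d & j = (d ^ n.+1)%N].
    move=> k l j hj he; rewrite !mulf_eq0 !negb_or => /and3P [hkl _ hps].
    have [_ hq] := key1 ha hb dn1 en1 hK (hq2 hkl) (hq4 hkl).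
    have [ek hl] : k = gam /\ (d <= l)%N by apply: hq; rewrite eq_sym; exact: he.
    have := wb_exp (k:=l) wQ hps; rewrite mul0n add0n mul1n => hlj.
    have hld : (l * d ^ n <= d * d ^ n)%N by apply: leq_trans hlj _; rewrite -expnS.
    rewrite leq_pmul2r // in hld.
    have el : l = d by apply/eqP; rewrite eqn_leq hld hl.
    split => //; subst l; apply/eqP; rewrite eqn_leq hj /=; by rewrite expnS.
  split.
    move=> j hj; rewrite e2 (comp_row _ z2 w1 hc) big1 // => k _; rewrite big1 // => l _.
    rewrite /ctf; case: ifP => // he; rewrite cterm; apply/eqP; apply: contraT => hne.
    have [_ _ ej] := hT k l j (ltnW hj) he hne; by rewrite ej ltnn in hj.
  rewrite e2 (comp_row _ z2 w1 hc) (sum2_single (k0:=gam) (l0:=d)).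
  + rewrite /ctf /= eqxx cterm expnS corner_exp //.
    by rewrite !mulf_neq0 // expf_neq0 // /row /=.
  + have h1 : (gam <= gam * delta ^ n)%N by rewrite leq_pmulr.
    rewrite /GG /=; lia.
  + have : (d <= d ^ n.+1)%N by rewrite expnS leq_pmulr.
    lia.
  + move=> k l _ _ hne; rewrite /ctf; case: ifP => // he; rewrite cterm; apply/eqP; apply: contraT => hnz.
    have [ek el _] := hT k l _ (leqnn _) he hnz; by rewrite ek el !eqxx in hne.
Qed.

End Main.

Lemma conv_eq (R : realType) (t x y c : R) : 0 < t -> t < 1 -> c <= x -> c <= y ->
  c = t * x + (1 - t) * y -> x = c /\ y = c.
Proof. move=> h0 h1 hx hy he; split; nra. Qed.
Lemma solve2 (R : realType) (u v u2 v2 x y : R) : u * v2 - v * u2 != 0 ->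
  u * x + v * y = 0 -> u2 * x + v2 * y = 0 -> x = 0 /\ y = 0.
Proof.
move=> hd h1 h2.
have ex : (u * v2 - v * u2) * x = 0.
  by rewrite -[RHS](_ : v2 * (u * x + v * y) - v * (u2 * x + v2 * y) = 0); [ring | rewrite h1 h2; ring].
have ey : (u * v2 - v * u2) * y = 0.
  by rewrite -[RHS](_ : u * (u2 * x + v2 * y) - u2 * (u * x + v * y) = 0); [ring | rewrite h1 h2; ring].
move/eqP: ex; move/eqP: ey; rewrite !mulf_eq0 (negbTE hd) /= => /eqP -> /eqP ->; by [].
Qed.

Section Geo.
Variables (R : realType) (C : nzRingType) (g : ps2 C).
Notation NP := (newton_polygon R g).

Lemma np_point i j (x y : R) : g i j != 0 -> i%:R <= x -> j%:R <= y -> NP (x, y).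
Proof.
move=> hg hx hy; exists 1%N, (fun _ => 1), (fun _ => (x, y)); split.
- by move=> _; rewrite ler01.
- by rewrite big_ord1.
- by move=> _; exists i, j.
- by rewrite big_ord1 mul1r.
- by rewrite big_ord1 mul1r.
Qed.

Lemma np_seg i1 j1 i2 j2 (s : R) : g i1 j1 != 0 -> g i2 j2 != 0 -> 0 <= s <= 1 ->
  NP ((1 - s) * i1%:R + s * i2%:R, (1 - s) * j1%:R + s * j2%:R).
Proof.
move=> h1 h2 /andP [s0 s1].
exists 2%N, (fun k => if k == ord0 then 1 - s else s),
  (fun k => if k == ord0 then (i1%:R, j1%:R) else (i2%:R, j2%:R)); split.
- by move=> k; case: ifP => _ //; rewrite subr_ge0.
- by rewrite big_ord_recl big_ord1 /=; ring.
- by move=> k; case: ifP => _; [exists i1, j1 | exists i2, j2].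
- by rewrite big_ord_recl big_ord1 /=.
- by rewrite big_ord_recl big_ord1 /=.
Qed.

Lemma np_lb (u v c : R) P : 0 <= u -> 0 <= v ->
  (forall i j, g i j != 0 -> c <= u * i%:R + v * j%:R) -> NP P -> c <= u * P.1 + v * P.2.
Proof.
move=> hu hv hc [n [t [X [t0 t1 hX -> ->]]]].
rewrite !mulr_sumr -big_split /=.
have -> : c = \sum_(k < n) t k * c by rewrite -mulr_suml t1 mul1r.
apply: ler_sum => k _; rewrite mulrCA (mulrCA v) -mulrDr ler_wpM2l //.
have [i [j [hg hi hj]]] := hX k.
apply: (le_trans (hc _ _ hg)); apply: lerD; exact: ler_wpM2l.
Qed.

Lemma np_face (u v c u2 v2 c2 : R) P : 0 <= u -> 0 <= v -> 0 <= u2 -> 0 <= v2 ->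
  (forall i j, g i j != 0 -> c <= u * i%:R + v * j%:R) ->
  (forall i j, g i j != 0 -> u * i%:R + v * j%:R = c -> c2 <= u2 * i%:R + v2 * j%:R) ->
  NP P -> u * P.1 + v * P.2 = c -> c2 <= u2 * P.1 + v2 * P.2.
Proof.
move=> hu hv hu2 hv2 hc hc2 [n [t [X [t0 t1 hX -> ->]]]] /=.
have lbX : forall k, c <= u * (X k).1 + v * (X k).2.
  move=> k; have [i [j [hg hi hj]]] := hX k.
  apply: (le_trans (hc _ _ hg)); apply: lerD; exact: ler_wpM2l.
rewrite !mulr_sumr -big_split /= => hsum.
have h0 : \sum_(k < n) t k * (u * (X k).1 + v * (X k).2 - c) = 0.
  rewrite (eq_bigr (fun k => (u * (t k * (X k).1) + v * (t k * (X k).2)) - t k * c)); last by move=> k _; ring.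
  by rewrite sumrB hsum -mulr_suml t1 mul1r subrr.
have hz : forall k, t k * (u * (X k).1 + v * (X k).2 - c) = 0.
  move=> k; move/eqP: h0; rewrite psumr_eq0 => [/allP hall|k' _].
    by apply/eqP; apply: hall; rewrite mem_index_enum.
  by apply: mulr_ge0 => //; rewrite subr_ge0.
rewrite -big_split /=.
have -> : c2 = \sum_(k < n) t k * c2 by rewrite -mulr_suml t1 mul1r.
apply: ler_sum => k _.
have := hz k; move/eqP; rewrite mulf_eq0 => /orP [/eqP e0 | hk]; first by rewrite e0 !(mul0r, mulr0, addr0).
rewrite mulrCA (mulrCA v2) -mulrDr ler_wpM2l //.
have [i [j [hg hi hj]]] := hX k.
have e : u * i%:R + v * j%:R = c.
  apply/le_anti; rewrite hc // andbT.
  move: hk; rewrite subr_eq0 => /eqP <-; apply: lerD; exact: ler_wpM2l.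
apply: (le_trans (hc2 _ _ hg e)); apply: lerD; exact: ler_wpM2l.
Qed.


Lemma np_vertex (u v u2 v2 : R) i0 j0 : 0 <= u -> 0 <= v -> 0 <= u2 -> 0 <= v2 ->
  u * v2 - v * u2 != 0 -> g i0 j0 != 0 ->
  (forall i j, g i j != 0 -> u * i0%:R + v * j0%:R <= u * i%:R + v * j%:R) ->
  (forall i j, g i j != 0 -> u * i%:R + v * j%:R = u * i0%:R + v * j0%:R ->
      u2 * i0%:R + v2 * j0%:R <= u2 * i%:R + v2 * j%:R) ->
  is_vertex NP (i0%:R, j0%:R).
Proof.
move=> hu hv hu2 hv2 hdet hg hc hc2; split; first exact: (np_point hg).
move=> A B t hA hB /andP [t0 t1] [e1 e2].
have lA := np_lb hu hv hc hA; have lB := np_lb hu hv hc hB.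
have [fA fB] : u * A.1 + v * A.2 = u * i0%:R + v * j0%:R /\ u * B.1 + v * B.2 = u * i0%:R + v * j0%:R.
  apply: conv_eq t0 t1 lA lB _; rewrite e1 e2; ring.
have lA2 := np_face hu hv hu2 hv2 hc hc2 hA fA.
have lB2 := np_face hu hv hu2 hv2 hc hc2 hB fB.
have [gA gB] : u2 * A.1 + v2 * A.2 = u2 * i0%:R + v2 * j0%:R /\ u2 * B.1 + v2 * B.2 = u2 * i0%:R + v2 * j0%:R.
  apply: conv_eq t0 t1 lA2 lB2 _; rewrite e1 e2; ring.
have hx : u * (A.1 - B.1) + v * (A.2 - B.2) = 0.
  transitivity ((u * A.1 + v * A.2) - (u * B.1 + v * B.2)); first ring.
  by rewrite fA fB subrr.
have hy : u2 * (A.1 - B.1) + v2 * (A.2 - B.2) = 0.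
  transitivity ((u2 * A.1 + v2 * A.2) - (u2 * B.1 + v2 * B.2)); first ring.
  by rewrite gA gB subrr.
have [x0 y0] := solve2 hdet hx hy.
case: A B {e1 e2 lA lB fA fB lA2 lB2 gA gB hA hB hx hy} x0 y0 => [a1 a2] [b1 b2] /= /eqP.
by rewrite subr_eq0 => /eqP -> /eqP; rewrite subr_eq0 => /eqP ->.
Qed.

Lemma np_leftvertex i0 j0 : g i0 j0 != 0 -> (forall i j, g i j != 0 -> (i0 <= i)%N) ->
  (forall j, g i0 j != 0 -> (j0 <= j)%N) ->
  forall P, is_vertex NP P -> P <> (i0%:R, j0%:R) -> i0%:R < P.1.
Proof.
move=> hg hi hj P [hP hv] hne.
have hc : forall i j, g i j != 0 -> i0%:R <= 1 * i%:R + 0 * j%:R :> R.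
  by move=> i j /hi h; rewrite mul1r mul0r addr0 ler_nat.
have := np_lb ler01 (lexx 0) hc hP; rewrite mul1r mul0r addr0 le_eqVlt => /orP [/eqP e1|//].
have hc2 : forall i j, g i j != 0 -> 1 * i%:R + 0 * j%:R = i0%:R :> R -> j0%:R <= 0 * i%:R + 1 * j%:R :> R.
  move=> i j hij; rewrite !(mul1r, mul0r, addr0, add0r) ler_nat => /eqP; rewrite eqr_nat => /eqP ei.
  by subst i; apply: hj.
have := np_face ler01 (lexx 0) (lexx 0) ler01 hc hc2 hP.
rewrite !(mul1r, mul0r, addr0, add0r) => /(_ (esym e1)); rewrite le_eqVlt => /orP [/eqP e2|lt2].
  by exfalso; apply: hne; case: P {hP hv} e1 e2 => [x y] /= -> ->.
exfalso.
have hA : NP (i0%:R, j0%:R) by apply: (np_point hg).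
have hB : NP (i0%:R, 2 * P.2 - j0%:R) by apply: (np_point hg) => //; lra.
have ht : 0 < (2 : R)^-1 < 1 by apply/andP; split; [rewrite invr_gt0 | rewrite invf_lt1]; lra.
have heq : P = ((2 : R)^-1 * i0%:R + (1 - (2 : R)^-1) * i0%:R,
                (2 : R)^-1 * j0%:R + (1 - (2 : R)^-1) * (2 * P.2 - j0%:R)).
  case: P {hP hv hne hA hB lt2} e1 => [x y] /= <-; rewrite [X in (_, X) = _](_ : y = 2^-1 * j0%:R + (1 - 2^-1) * (2 * y - j0%:R)); last by field.
  by rewrite [X in (X, _) = _](_ : i0%:R = 2^-1 * i0%:R + (1 - 2^-1) * i0%:R :> R); last by field.
have := hv _ _ _ hA hB ht heq; move/(congr1 snd) => /= h.
move: h lt2; move: (P.2) (j0%:R : R) => y z h1 h2; clear -h1 h2; lra.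
Qed.

Lemma vertex_mid P A B : is_vertex NP P -> NP A -> NP B ->
  P.1 = (A.1 + B.1) / 2 -> P.2 = (A.2 + B.2) / 2 -> A = B.
Proof.
move=> [_ hv] hA hB e1 e2; apply: (hv A B (2^-1) hA hB).
  by apply/andP; split; [rewrite invr_gt0 | rewrite invf_lt1]; lra.
case: P e1 e2 {hv} => [x y] /= -> ->.
rewrite [X in (X, _) = _](_ : (A.1 + B.1) / 2 = 2^-1 * A.1 + (1 - 2^-1) * B.1); last by field.
by rewrite [X in (_, X) = _](_ : (A.2 + B.2) / 2 = 2^-1 * A.2 + (1 - 2^-1) * B.2); last by field.
Qed.

Lemma np_vertex_support P : is_vertex NP P -> exists i j, g i j != 0 /\ P = (i%:R, j%:R).
Proof.
move=> hV; have [[n [t [X [t0 t1 hX e1 e2]]]] hv] := hV.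
have [k hk] : exists k, 0 < t k.
  case: (pickP (fun k => 0 < t k)) => [k hk | hall]; first by exists k.
  exfalso; move: t1; rewrite big1 => [|k _]; first by move/eqP; rewrite eq_sym oner_eq0.
  by apply/le_anti; rewrite t0 andbT leNgt; move: (hall k) => /= ->.
have hXk : NP (X k) by have [i [j [hg hi hj]]] := hX k; case: (X k) hi hj => x y /= hi hj; exact: (np_point hg).
have hPX : P = X k.
  have hs : \sum_(l < n | l != k) t l = 1 - t k.
    by rewrite -t1 [in RHS](bigD1 k) //= addrAC subrr add0r.
  have s1 : P.1 = t k * (X k).1 + \sum_(l < n | l != k) t l * (X l).1 by rewrite e1 (bigD1 k).
  have s2 : P.2 = t k * (X k).2 + \sum_(l < n | l != k) t l * (X l).2 by rewrite e2 (bigD1 k).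
  case: (eqVneq (t k) 1) => [tk1|tk1].
  - have hz : forall l, l != k -> t l = 0.
      move=> l hl; move/eqP: hs; rewrite tk1 subrr psumr_eq0 => [/allP hall|l' _]; last exact: t0.
      by apply/eqP; move: (hall l (mem_index_enum _)); rewrite hl.
    case: P e1 e2 s1 s2 {hV hv} => [x y] /= _ _ -> ->.
    rewrite !big1 ?tk1 ?mul1r ?addr0; first by case: (X k).
    + by move=> l hl; rewrite hz // mul0r.
    + by move=> l hl; rewrite hz // mul0r.
  - have tk1' : t k < 1.
      rewrite lt_neqAle tk1 /= -subr_ge0 -hs; apply: sumr_ge0 => l _; exact: t0.
    have hnz : 1 - t k != 0 by rewrite subr_eq0 eq_sym.
    pose t' := fun l => if l == k then 0 else t l / (1 - t k).
    pose B := (\sum_(l < n) t' l * (X l).1, \sum_(l < n) t' l * (X l).2).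
    have hsum' : forall F : 'I_n -> R, (1 - t k) * \sum_(l < n) t' l * F l = \sum_(l < n | l != k) t l * F l.
      move=> F; rewrite (bigD1 k) //= /t' eqxx mul0r add0r mulr_sumr; apply: eq_bigr => l hl.
      by rewrite (negbTE hl); field.
    have hB : NP B.
      exists n, t', X; split => //.
      - by move=> l; rewrite /t'; case: ifP => _ //; apply: divr_ge0 => //; rewrite subr_ge0 ltW.
      - apply: (mulfI hnz); rewrite mulr1 -[RHS]hs.
        rewrite (bigD1 k) //= /t' eqxx add0r mulr_sumr; apply: eq_bigr => l hl.
        by rewrite (negbTE hl); field.
    have := hv (X k) B (t k) hXk hB; rewrite hk tk1' => /(_ isT) hXB.
    suff eP : P = (t k * (X k).1 + (1 - t k) * B.1, t k * (X k).2 + (1 - t k) * B.2).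
      have e := hXB eP; clear hXB; rewrite eP -e.
      by case: (X k) => x y /=; rewrite -!mulrDl addrC subrK !mul1r.
    by case: P s1 s2 {hV hv e1 e2 hXB} => x y /= -> ->; rewrite !hsum'.
have [i [j [hg hi hj]]] := hX k.
exists i, j; split => //; rewrite hPX.
case: (X k) hi hj hPX => x y /= hi hj hPX.
have ex : x = i%:R.
  apply/eqP; rewrite eq_le hi andbT; rewrite leNgt; apply/negP => hlt.
  have hA : NP (i%:R, y) by apply: (np_point hg).
  have hB : NP (2 * x - i%:R, y) by apply: (np_point hg) => //; lra.
  have hAB : (i%:R, y) = (2 * x - i%:R, y) by apply: (vertex_mid hV hA hB); rewrite hPX /=; field.
  move/(congr1 fst): hAB => /= h; move: h hlt; clear -x; move: x (i%:R : R) => x' z h1 h2; lra.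
have ey : y = j%:R.
  apply/eqP; rewrite eq_le hj andbT; rewrite leNgt; apply/negP => hlt.
  have hA : NP (x, j%:R) by apply: (np_point hg).
  have hB : NP (x, 2 * y - j%:R) by apply: (np_point hg) => //; lra.
  have hAB : (x, j%:R) = (x, 2 * y - j%:R) by apply: (vertex_mid hV hA hB); rewrite hPX /=; field.
  move/(congr1 snd): hAB => /= h; move: h hlt; clear -y; move: y (j%:R : R) => x' z h1 h2; lra.
by rewrite ex ey.
Qed.

Lemma np_contra (x0 y0 x1 y1 xa ya : nat) (u v : R) : 0 < u -> 0 < v ->
  g x0 y0 != 0 -> g x1 y1 != 0 -> g xa ya != 0 -> is_vertex NP (x1%:R, y1%:R) ->
  (x0 < x1)%N -> (x1 < xa)%N ->
  u * x1%:R + v * y1%:R = u * x0%:R + v * y0%:R ->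
  u * xa%:R + v * ya%:R < u * x0%:R + v * y0%:R -> False.
Proof.
move=> hu hv h0 h1 ha hV1 l01 l1a e1 lt.
have r01 : x0%:R < x1%:R :> R by rewrite ltr_nat.
have r1a : x1%:R < xa%:R :> R by rewrite ltr_nat.
set X0 := x0%:R in r01 e1 lt *; set X1 := x1%:R in r01 r1a e1 hV1 *; set XA := xa%:R in r1a lt *.
set Y0 := y0%:R in e1 lt *; set Y1 := y1%:R in e1 hV1 *; set YA := ya%:R in lt *.
have hden : XA - X0 != 0 by rewrite subr_eq0; apply/eqP => e; move: r01 r1a; rewrite e; lra.
pose s := (X1 - X0) / (XA - X0).
have s0 : 0 < s by apply: divr_gt0; lra.
have s1 : s < 1 by rewrite /s ltr_pdivrMr; lra.
have hQ := np_seg h0 ha (_ : 0 <= s <= 1); rewrite -/X0 -/XA -/Y0 -/YA in hQ.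
have hQx : (1 - s) * X0 + s * XA = X1 by rewrite /s; field.
set Qy := (1 - s) * Y0 + s * YA in hQ.
have hpsi : u * X1 + v * Qy = (u * X0 + v * Y0) - s * ((u * X0 + v * Y0) - (u * XA + v * YA)).
  by rewrite -hQx /Qy; ring.
have hpos : 0 < s * ((u * X0 + v * Y0) - (u * XA + v * YA)) by apply: mulr_gt0 => //; lra.
have hQy : v * Qy < v * Y1 by lra.
rewrite ltr_pM2l // in hQy.
have hB : NP (X1, 2 * Y1 - Qy) by apply: (np_point h1) => //; lra.
have := vertex_mid hV1 (hQ (ltac:(apply/andP; split; lra))) hB; rewrite hQx /=.
move=> /(_ (ltac:(field)) (ltac:(field))) /(congr1 snd) /= e.
lra.
Qed.
End Geo.

Unset Implicit Arguments. Set Strict Implicit.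

Lemma min_nat (P : nat -> Prop) : (exists n, P n) -> exists n, P n /\ forall m, P m -> (n <= m)%N.
Proof.
move=> [n hn]; elim/ltn_ind: n hn => n IH hn.
case: (classic (exists m, P m /\ (m < n)%N)) => [[m [hm hlt]]|hno]; first exact: IH hm.
exists n; split => // m hm; rewrite leqNgt; apply/negP => hlt; apply: hno; by exists m.
Qed.

Lemma pair_natr (R : realType) (i j x y : nat) : ((i%:R, j%:R) : R * R) = (x%:R, y%:R) -> i = x /\ j = y.
Proof.
move=> e; have := congr1 fst e; have := congr1 snd e => /= /eqP; rewrite eqr_nat => /eqP -> /eqP.
by rewrite eqr_nat => /eqP ->.
Qed.

Lemma G_sum gam delta d n : G gam delta d n = (gam * \sum_(k < n) delta ^ (n.-1 - k) * d ^ k)%N.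
Proof.
elim: n => [|n IH]; first by rewrite big_ord0 muln0.
rewrite /= IH big_ord_recl /= subn0 expn0 muln1 mulnDr; congr (_ + _)%N.
rewrite mulnCA; congr (_ * _)%N; rewrite big_distrr /=; apply: eq_bigr => k _.
rewrite /bump /= add1n expnS mulnCA; congr (_ * (_ * _))%N; congr (_ ^ _)%N; lia.
Qed.

Theorem proposition5 (R : realType) (p : nat -> R[i]) (q : ps2 R[i])
    (delta : nat) (vs : seq (nat * nat)) :
  (* p(z) = a_delta z^delta + O(z^(delta+1)), a_delta <> 0, delta >= 1 *)
  (1 <= delta)%N ->
  (forall k, (k < delta)%N -> p k = 0) -> p delta != 0 ->
  (* q(0,0) = 0 and q is not identically zero *)
  q 0%N 0%N = 0 -> (exists i j, q i j != 0) ->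
  (* holomorphic germs *)
  convergent1 p -> convergent2 q ->
  (* vs = [(n_1,m_1); ...; (n_s,m_s)] lists the vertices of N(q), n_k increasing, m_k decreasing *)
  (forall P : R * R, is_vertex (newton_polygon R q) P <->
      exists2 v, v \in vs & P = ((v.1)%:R, (v.2)%:R)) ->
  sorted (fun a b : nat * nat => (a.1 < b.1)%N && (b.2 < a.2)%N) vs ->
  (* Case 3: s > 1 and T_1 <= delta *)
  (1 < size vs)%N ->
  let n1 := (nth (0%N, 0%N) vs 0).1 in let m1 := (nth (0%N, 0%N) vs 0).2 in
  let n2 := (nth (0%N, 0%N) vs 1).1 in let m2 := (nth (0%N, 0%N) vs 1).2 in
  (m1%:R + n1%:R * (m1%:R - m2%:R) / (n2%:R - n1%:R) <= delta%:R :> R) ->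
  let gamma := n1 in let d := m1 in
  let l2 : R := (n2%:R - n1%:R) / (m1%:R - m2%:R) in
  forall n : nat, (1 <= n)%N ->
    let gamma_n := (gamma * \sum_(k < n) delta ^ (n.-1 - k) * d ^ k)%N in
    let Qn := Qiter p q n in
    (* the order of Q^n in z is gamma_n *)
    ((exists j, Qn gamma_n j != 0) /\ (forall i j, Qn i j != 0 -> (gamma_n <= i)%N))
    (* (gamma_n, d^n) is the vertex of N(Q^n) with minimal x-coordinate *)
    /\ (is_vertex (newton_polygon R Qn) (gamma_n%:R, (d ^ n)%:R)
        /\ forall P, is_vertex (newton_polygon R Qn) P ->
             P <> (gamma_n%:R, (d ^ n)%:R) -> gamma_n%:R < P.1)
    (* N(Q^n) is contained in {x >= gamma_n, x + l2 y >= gamma_n + l2 d^n} *)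
    /\ (forall P, newton_polygon R Qn P ->
          gamma_n%:R <= P.1 /\ gamma_n%:R + l2 * (d ^ n)%:R <= P.1 + l2 * P.2).
Proof.
move=> hdel hp0 hpd hq00 hqex hcp hcq hV hsort hsize n1 m1 n2 m2 hcase gamma d l2 n hn gamma_n Qn.
have ev0 : nth (0%N, 0%N) vs 0 = (n1, m1) by rewrite /n1 /m1; case: (nth _ vs 0).
have ev1 : nth (0%N, 0%N) vs 1 = (n2, m2) by rewrite /n2 /m2; case: (nth _ vs 1).
pose r := fun a b : nat * nat => (a.1 < b.1)%N && (b.2 < a.2)%N.
have tr : transitive r.
  move=> y x z /andP [h1 h2] /andP [h3 h4]; apply/andP; split; lia.
have hrn : forall i j, (i < j)%N -> (j < size vs)%N -> r (nth (0%N, 0%N) vs i) (nth (0%N, 0%N) vs j).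
  move=> i j hij hj; apply: (sorted_ltn_nth tr) => //; rewrite inE /=; lia.
have h01 := hrn 0%N 1%N isT hsize; rewrite ev0 ev1 /r /= in h01.
case/andP: h01 => ln12 lm21.
have hvs : forall v, v \in vs -> exists idx, (idx < size vs)%N /\ v = nth (0%N, 0%N) vs idx.
  by move=> v hv; exists (index v vs); rewrite index_mem nth_index.
have hsup : forall idx, (idx < size vs)%N ->
    q (nth (0%N, 0%N) vs idx).1 (nth (0%N, 0%N) vs idx).2 != 0.
  move=> idx hidx.
  have hv : is_vertex (newton_polygon R q) ((nth (0%N, 0%N) vs idx).1%:R, (nth (0%N, 0%N) vs idx).2%:R).
    by apply/hV; exists (nth (0%N, 0%N) vs idx) => //; exact: mem_nth.
  have [i [j [hg e]]] := np_vertex_support hv.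
  by have [-> ->] := @pair_natr R _ _ _ _ e.
have hfirst : forall v, v \in vs -> v = (n1, m1) \/ (n1 < v.1)%N /\ (v.2 < m1)%N.
  move=> v /hvs [[|idx] [hidx ->]]; first by left.
  by right; have := hrn 0%N idx.+1 isT hidx; rewrite ev0 /r /= => /andP.
have hq1 : q n1 m1 != 0 by have := hsup 0%N (ltnW hsize); rewrite ev0.
set a := (m1 - m2)%N.
set b := (n2 - n1)%N.
have ha : (0 < a)%N by rewrite /a; lia.
have hb : (0 < b)%N by rewrite /b; lia.
have hd : (1 <= m1)%N by lia.
have hq2 : forall k l, q k l != 0 -> (n1 <= k)%N.
  have [i0 [[j' hj'] hi0]] := min_nat (fun i => exists j, q i j != 0) hqex.
  have [j0 [hj0 hj0m]] := min_nat (fun j => q i0 j != 0) (ex_intro _ j' hj').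
  have hv0 : is_vertex (newton_polygon R q) (i0%:R, j0%:R).
    apply: (@np_vertex R _ q 1 0 0 1) => //; rewrite ?ler01 ?lexx //.
    - by rewrite !(mul1r, mul0r, mulr1, subr0) oner_eq0.
    - move=> i j hij; rewrite !(mul1r, mul0r, addr0) ler_nat; exact: hi0 (ex_intro _ j hij).
    - move=> i j hij; rewrite !(mul1r, mul0r, addr0, add0r) => /eqP; rewrite eqr_nat => /eqP ei.
      by subst i; rewrite ler_nat; exact: hj0m.
  have [v hv ev] := (hV _).1 hv0.
  have [ei _] := @pair_natr R _ _ _ _ ev.
  move=> k l hkl; have := hi0 k (ex_intro _ l hkl).
  case: (hfirst v hv) => [ve|[h1 _]]; rewrite ei ?ve /= => // h; exact: leq_trans (ltnW h1) h.
have hcaseN : (n1 * a + m1 * b <= delta * b)%N.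
  have eA : m1%:R - m2%:R = a%:R :> R by rewrite /a natrB //; lia.
  have eB : n2%:R - n1%:R = b%:R :> R by rewrite /b natrB //; lia.
  have hbR : 0 < b%:R :> R by rewrite ltr0n.
  rewrite eA eB in hcase; rewrite -(ler_nat R) !natrD !natrM.
  have h := hcase; rewrite -(ler_pM2r hbR) mulrDl divfK ?gt_eqF // addrC in h; exact: h.
have hq4 : forall k l, q k l != 0 -> (a * n1 + b * m1 <= a * k + b * l)%N.
  have [c [[ic [jc [hgc ec]]] hcmin]] := min_nat (fun c => exists i j, q i j != 0 /\ (a * i + b * j)%N = c)
    (ex_intro _ (a * n1 + b * m1)%N (ex_intro _ n1 (ex_intro _ m1 (conj hq1 erefl)))).
  have [is0 [[js [hgs es]] hsmin]] := min_nat (fun i => exists j, q i j != 0 /\ (a * i + b * j)%N = c)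
    (ex_intro _ ic (ex_intro _ jc (conj hgc ec))).
  have hvs0 : is_vertex (newton_polygon R q) (is0%:R, js%:R).
    apply: (@np_vertex R _ q a%:R b%:R 1 0) => //; rewrite ?ler01 ?lexx ?ler0n //.
    - by rewrite mulr0 mulr1 sub0r oppr_eq0 pnatr_eq0 -lt0n.
    - move=> i j hij; rewrite -!natrM -!natrD ler_nat es.
      exact: hcmin (ex_intro _ i (ex_intro _ j (conj hij erefl))).
    - move=> i j hij; rewrite -!natrM -!natrD => /eqP; rewrite eqr_nat es => /eqP eij.
      rewrite !(mul1r, mul0r, addr0) ler_nat; exact: hsmin (ex_intro _ j (conj hij eij)).
  move=> k l hkl.
  have hck : (c <= a * k + b * l)%N by exact: hcmin (ex_intro _ k (ex_intro _ l (conj hkl erefl))).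
  suff : (a * n1 + b * m1 <= c)%N by lia.
  rewrite leqNgt; apply/negP => hlt.
  have [v hv ev] := (hV _).1 hvs0.
  have [ei ej] := @pair_natr R _ _ _ _ ev.
  have [idx [hidx ev']] := hvs v hv.
  have e12 : (a * n2 + b * m2 = a * n1 + b * m1)%N by rewrite /a /b; nia.
  case: idx hidx ev' => [|[|idx]] hidx ev'.
  - by move: hlt; rewrite -es ei ej ev' ev0 /= ltnn.
  - by move: hlt; rewrite -es ei ej ev' ev1 /= e12 ltnn.
  - have := hrn 1%N idx.+2 isT hidx; rewrite ev1 -ev' /r /= => /andP [h1 h2].
    apply: (@np_contra R _ q n1 m1 n2 m2 is0 js a%:R b%:R); rewrite ?ltr0n //.
    + by have := hsup 1%N hsize; rewrite ev1.
    + by apply/hV; exists (n2, m2) => //; rewrite -ev1 mem_nth.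
    + by rewrite ei.
    + by rewrite -!natrM -!natrD e12.
    + by rewrite -!natrM -!natrD ltr_nat es.
move: (skew_inv hdel hp0 hpd ha hb hd hcaseN hq1 hq2 hq4 n) => /= [[z1 z2 z3 w1 w2] [w3 w4]].
set GGn := G n1 delta m1 n in w1 w2 w3 w4.
have egn : gamma_n = GGn by rewrite /gamma_n /GGn G_sum.
have eQ : Qn = (skew_iter p q n).2 by [].
rewrite egn eQ /d.
have w1' : forall i j, (skew_iter p q n).2 i j != 0 -> (GGn <= i)%N.
  by move=> i j /w1; rewrite mul1n mul0n addn0.
have w3' : forall j, (skew_iter p q n).2 GGn j != 0 -> (m1 ^ n <= j)%N.
  by move=> j hj; rewrite leqNgt; apply/negP => hlt; move: hj; rewrite w3 ?eqxx.
split; [split|split; [split|]].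
- by exists (m1 ^ n)%N.
- exact: w1'.
- apply: (@np_vertex R _ _ 1 0 0 1) => //; rewrite ?ler01 ?lexx //.
  + by rewrite !(mul1r, mul0r, mulr1, subr0) oner_eq0.
  + by move=> i j hij; rewrite !(mul1r, mul0r, addr0) ler_nat; exact: w1' hij.
  + move=> i j hij; rewrite !(mul1r, mul0r, addr0, add0r) => /eqP; rewrite eqr_nat => /eqP ei.
    by subst i; rewrite ler_nat; exact: w3'.
- exact: np_leftvertex w4 w1' w3'.
- move=> P hP; split.
  + have h := @np_lb R _ (skew_iter p q n).2 1 0 GGn%:R P ler01 (lexx 0).
    rewrite mul1r mul0r addr0 in h; apply: h hP.
    by move=> i j hij; rewrite !(mul1r, mul0r, addr0) ler_nat; exact: w1' hij.
  + have hl2 : (a * GGn + b * m1 ^ n)%N%:R <= a%:R * P.1 + b%:R * P.2 :> R.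
      apply: (@np_lb R _ (skew_iter p q n).2 _ _ _ P (ler0n _ _) (ler0n _ _) _ hP) => i j hij.
      by rewrite -!natrM -!natrD ler_nat; exact: w2.
    have eA : m1%:R - m2%:R = a%:R :> R by rewrite /a natrB //; lia.
    have eB : n2%:R - n1%:R = b%:R :> R by rewrite /b natrB //; lia.
    have haR : 0 < a%:R :> R by rewrite ltr0n.
    have el2 : l2 = b%:R / a%:R by rewrite /l2 eA eB.
    rewrite /l2 ?eA ?eB -(ler_pM2l haR).
    have E1 : a%:R * (GGn%:R + b%:R / a%:R * (m1 ^ n)%N%:R) = (a * GGn + b * m1 ^ n)%N%:R :> R.
      by rewrite natrD !natrM; field; rewrite gt_eqF.
    have E2 : a%:R * (P.1 + b%:R / a%:R * P.2) = a%:R * P.1 + b%:R * P.2 :> R.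
      by field; rewrite gt_eqF.
    by rewrite E1 E2.
Qed.
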